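(* Let $\mathbf F\in\mathcal F_d$. The map $S_{\mathbf F}$ restricted to $\mathcal C^{OS}(\mathbf F)$ is injective; hence it is a bijection from $\mathcal C^{OS}(\mathbf F)$ onto $S_{\mathbf F}(\mathcal C^{OS}(\mathbf F))$.
   Context: $\mathcal F_d$: $d$-tuples $\mathbf F=(\mathbf F_1,\dots,\mathbf F_d)$ of continuous cdf's on $\mathbb R$ with $\mathbf F_{i-1}\ge\mathbf F_i$ for $2\le i\le d$. $\mathcal L^{OS}_d(\mathbf F)$: cdf's of random vectors $X$ with $X_1\le\dots\le X_d$ a.s. and $X_i$ with cdf $\mathbf F_i$. A copula is a cdf on $\mathbb R^d$ with uniform-on-$[0,1]$ marginals; for a cdf $F$ with continuous marginals $F_i$, its copula is $C_F(y)=F(F_1^{-1}(y_1),\dots,F_d^{-1}(y_d))$ with $J^{-1}(t)=\inf\{s:J(s)\ge t\}$. $\mathcal C^{OS}(\mathbf F)=\{C_F:F\in\mathcal L^{OS}_d(\mathbf F)\}$. For a copula $C$, $S_{\mathbf F}(C)$ is the copula of the exchangeable vector $X_\Pi=(X_{\Pi(1)},\dots,X_{\Pi(d)})$, where $X$ has one-dimensional marginal cdf's $\mathbf F$ and copula $C$, and $\Pi$ is independent of $X$ and uniform on the permutations of $\{1,\dots,d\}$ (its marginals are all $G=\frac1d\sum\mathbf F_i$, which is continuous, so this copula is unique). *)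

(* Defs.v *)
From HB Require Import structures.
From mathcomp Require Import all_boot all_order all_algebra all_fingroup.
From mathcomp Require Import all_classical all_reals all_analysis.
Set Implicit Arguments. Unset Strict Implicit. Unset Printing Implicit Defensive.
Import Order.TTheory GRing.Theory Num.Theory.
Import numFieldNormedType.Exports.
Local Open Scope classical_set_scope.
Local Open Scope ring_scope.

Section Defs.
Variable R : realType.

Definition continuous_cdf (J : R -> R) : Prop :=
  [/\ {homo J : x y / x <= y},
      continuous J,
      J x @[x --> -oo] --> (0 : R) &
      J x @[x --> +oo] --> (1 : R)].

Definition calF (d : nat) (F : 'I_d -> R -> R) : Prop :=
  (forall i, continuous_cdf (F i)) /\
  (forall i j : 'I_d, nat_of_ord j = (nat_of_ord i).+1 -> forall x, F j x <= F i x).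

(* Generalized inverse J^{-1}(t) = inf {s : J s >= t}, in the extended reals
   (so that it is -oo when the set is unbounded below, +oo when it is empty). *)
Definition ginv (J : R -> R) (t : R) : \bar R :=
  ereal_inf (EFin @` [set s | t <= J s]).

Context {dT : measure_display} {T : measurableType dT} (P : probability T R).

Definition rv_cdf (Y : T -> R) (s : R) : R := fine (P (Y @^-1` `]-oo, s])).

Definition rvec_cdfE (d : nat) (X : 'I_d -> T -> R) (x : 'I_d -> \bar R) : R :=
  fine (P [set t | forall i, ((X i t)%:E <= x i)%E]).

Definition copula_of (d : nat) (X : 'I_d -> T -> R) : ('I_d -> R) -> R :=
  fun y => rvec_cdfE X (fun i => ginv (rv_cdf (X i)) (y i)).

Definition is_rvec (d : nat) (X : 'I_d -> T -> R) : Prop :=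
  forall i, measurable_fun setT (X i).

Definition sigmaX (d : nat) (X : 'I_d -> T -> R) : set (set T) :=
  <<s [set A | exists i B, measurable B /\ A = X i @^-1` B] >>.

Definition uniform_perm (d : nat) (Pi : T -> {perm 'I_d}) : Prop :=
  forall s : {perm 'I_d}, measurable (Pi @^-1` [set s]) /\
    P (Pi @^-1` [set s]) = ((d`!)%:R^-1 : R)%:E.

Definition indep_vec_perm (d : nat) (X : 'I_d -> T -> R) (Pi : T -> {perm 'I_d}) :=
  forall A (s : {perm 'I_d}), sigmaX X A ->
    P (A `&` Pi @^-1` [set s]) = (P A * P (Pi @^-1` [set s]))%E.

End Defs.

Definition COS (R : realType) (d : nat) (F : 'I_d -> R -> R)
    (C : ('I_d -> R) -> R) : Prop :=
  exists (dT : measure_display) (T : measurableType dT) (P : probability T R)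
         (X : 'I_d -> T -> R),
    [/\ is_rvec X,
        {ae P, forall t, forall i j : 'I_d,
            nat_of_ord j = (nat_of_ord i).+1 -> X i t <= X j t},
        (forall i, rv_cdf P (X i) = F i) &
        C = copula_of P X].

(* SF F C D : D = S_F(C), i.e. D is the copula of X_Pi = (X_{Pi(1)},...,X_{Pi(d)})
   where X has marginal cdfs F and copula C, and Pi is independent of X and
   uniform on the permutations. *)
Definition SF (R : realType) (d : nat) (F : 'I_d -> R -> R)
    (C D : ('I_d -> R) -> R) : Prop :=
  exists (dT : measure_display) (T : measurableType dT) (P : probability T R)
         (X : 'I_d -> T -> R) (Pi : T -> {perm 'I_d}),
    [/\ is_rvec X,
        (forall i, rv_cdf P (X i) = F i),
        C = copula_of P X,
        uniform_perm P Pi /\ indep_vec_perm P X Pi &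
        D = copula_of P (fun i t => X (Pi t i) t)].

(* Main.v *)
Require Import Defs.
From HB Require Import structures.
From mathcomp Require Import all_boot all_order all_algebra all_fingroup.
From mathcomp Require Import all_classical all_reals all_analysis.
Set Implicit Arguments. Unset Strict Implicit. Unset Printing Implicit Defensive.
Import Order.TTheory GRing.Theory Num.Theory.
Import numFieldNormedType.Exports.
Local Open Scope classical_set_scope.
Local Open Scope ring_scope.
Section S.
Variable R : realType.

Lemma mpre dT (T : measurableType dT) (f : T -> R) (B : set R) :
  measurable_fun setT f -> measurable B -> measurable (f @^-1` B).
Proof. by move=> mf mB; rewrite -[_ @^-1` _]setTI; exact: mf. Qed.

Lemma mle dT (T : measurableType dT) (f : T -> R) (a : \bar R) :
  measurable_fun setT f -> measurable [set t | ((f t)%:E <= a)%E].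
Proof.
move=> mf; case: a => [r| |].
- have -> : [set t | ((f t)%:E <= r%:E)%E] = f @^-1` `]-oo, r].
    by apply/seteqP; split=> t /=; rewrite in_itv /= lee_fin.
  exact: mpre.
- have -> : [set t | ((f t)%:E <= +oo)%E] = setT.
    by apply/seteqP; split=> t //= _; rewrite leey.
  exact: measurableT.
- have -> : [set t | ((f t)%:E <= -oo)%E] = set0.
    by apply/seteqP; split=> t //=; rewrite leeNy_eq.
  exact: measurable0.
Qed.

Definition orth d (a : 'I_d -> \bar R) : set ('I_d -> R) :=
  [set x | forall i, ((x i)%:E <= a i)%E].
Definition vec d (T : Type) (X : 'I_d -> T -> R) := fun t i => X i t.

Lemma orth_meas dT (T : measurableType dT) d (X : 'I_d -> T -> R) a :
  is_rvec X -> measurable (vec X @^-1` orth a).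
Proof.
move=> mX.
have -> : vec X @^-1` orth a = \bigcap_(i in [set: 'I_d]) [set t | ((X i t)%:E <= a i)%E].
  by apply/seteqP; split => t /= H i; [move=> _; exact: H | exact: H].
apply: fin_bigcap_measurable; first exact: finite_finset.
by move=> i _; apply: mle.
Qed.

Lemma fine_meas_eq dT (T : measurableType dT) dT' (T' : measurableType dT')
  (P : probability T R) (P' : probability T' R) A B :
  measurable A -> measurable B -> fine (P A) = fine (P' B) -> P A = P' B.
Proof.
move=> mA mB h; rewrite -(fineK (fin_num_measure P _ mA)) h.
by rewrite fineK // fin_num_measure.
Qed.


Lemma preD (A B : Type) (f : A -> B) (Y1 Y2 : set B) :
  f @^-1` (Y1 `\` Y2) = f @^-1` Y1 `\` f @^-1` Y2.
Proof. by []. Qed.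

Definition Gorth d : set (set ('I_d -> R)) := range (@orth d).

Lemma Gorth_setI d : setI_closed (@Gorth d).
Proof.
move=> _ _ [a _ <-] [b _ <-]; exists (fun i => Order.min (a i) (b i)) => //.
apply/seteqP; split => x /=.
- by move=> H; split => i; have := H i; rewrite le_min => /andP[].
- by move=> [Ha Hb] i; rewrite le_min Ha Hb.
Qed.

Lemma law_transfer_all dT (T : measurableType dT) dT' (T' : measurableType dT')
  (P : probability T R) (P' : probability T' R) d (X : 'I_d -> T -> R)
  (X' : 'I_d -> T' -> R) :
  is_rvec X -> is_rvec X' ->
  (forall a, rvec_cdfE P X a = rvec_cdfE P' X' a) ->
  forall A, <<s @Gorth d >> A ->
   measurable (vec X @^-1` A) /\ measurable (vec X' @^-1` A) /\
   P (vec X @^-1` A) = P' (vec X' @^-1` A).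
Proof.
move=> mX mX' hcdf.
pose H := [set A : set ('I_d -> R) | measurable (vec X @^-1` A) /\
   measurable (vec X' @^-1` A) /\ P (vec X @^-1` A) = P' (vec X' @^-1` A)].
suff: <<s @Gorth d >> `<=` H by move=> h A /h.
apply: lambda_system_subset.
- exact: Gorth_setI.
- split.
  + by [].
  + rewrite /H /= !preimage_setT; split; first exact: measurableT.
    by split; [exact: measurableT|rewrite !probability_setT].
  + move=> A B BA [mA [mA' eA]] [mB [mB' eB]]; rewrite /H /= !preD.
    split; first exact: measurableD.
    split; first exact: measurableD.
    have ltA : (P (vec X @^-1` A) < +oo)%E.
      by rewrite (le_lt_trans (probability_le1 _ mA)) ?ltry.
    have ltA' : (P' (vec X' @^-1` A) < +oo)%E.
      by rewrite (le_lt_trans (probability_le1 _ mA')) ?ltry.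
    rewrite measureD // measureD // !setIidr; try exact: preimage_subset; by congr (_ - _)%E.
  + move=> F ndF HF.
    have mF n : measurable (vec X @^-1` F n) by have [] := HF n.
    have mF' n : measurable (vec X' @^-1` F n) by have [_ []] := HF n.
    rewrite /H /= !preimage_bigcup; split; first exact: bigcupT_measurable.
    split; first exact: bigcupT_measurable.
    have ndX : nondecreasing_seq (fun n => vec X @^-1` F n).
      by move=> m n mn; apply/subsetPset; apply: preimage_subset; exact/subsetPset/ndF.
    have ndX' : nondecreasing_seq (fun n => vec X' @^-1` F n).
      by move=> m n mn; apply/subsetPset; apply: preimage_subset; exact/subsetPset/ndF.
    have c1 := nondecreasing_cvg_mu (mu:=P) mF (bigcupT_measurable _ mF) ndX.
    have c2 := nondecreasing_cvg_mu (mu:=P') mF' (bigcupT_measurable _ mF') ndX'.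
    have e : (P \o (fun n => vec X @^-1` F n)) = (P' \o (fun n => vec X' @^-1` F n)).
      by apply/funext=> n /=; have [_ []] := HF n.
    rewrite e in c1; exact: (cvg_unique _ c1 c2).
- move=> A [a _ <-]; rewrite /H; split; first exact: orth_meas.
  split; first exact: orth_meas.
  by apply: fine_meas_eq; [exact: orth_meas|exact: orth_meas|exact: hcdf a].
- by [].
Qed.


Lemma law_transfer dT (T : measurableType dT) dT' (T' : measurableType dT')
  (P : probability T R) (P' : probability T' R) d (X : 'I_d -> T -> R)
  (X' : 'I_d -> T' -> R) :
  is_rvec X -> is_rvec X' ->
  (forall a, rvec_cdfE P X a = rvec_cdfE P' X' a) ->
  forall A, <<s @Gorth d >> A ->
   P (vec X @^-1` A) = P' (vec X' @^-1` A).
Proof. by move=> mX mX' h A hA; have [_ []] := law_transfer_all mX mX' h hA. Qed.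

Lemma pre_meas dT (T : measurableType dT) (P : probability T R) d (X : 'I_d -> T -> R) A :
  is_rvec X -> <<s @Gorth d >> A -> measurable (vec X @^-1` A).
Proof. by move=> mX hA; have [] := @law_transfer_all _ _ _ _ P P d X X mX mX (fun=> erefl) _ hA. Qed.

Section Sk.
Context {dT : measure_display} {T : measurableType dT} (P : probability T R).

Lemma negl_meas A : measurable A -> P.-negligible A -> P A = 0%E.
Proof. by move=> mA /(negligibleP _ mA). Qed.

Lemma eq_negl A B : measurable A -> measurable B -> B `<=` A ->
  P.-negligible (A `\` B) -> P A = P B.
Proof.
move=> mA mB BA nAB; rewrite (measureDI P mA mB) setIidr //.
have h0 := (negl_meas (measurableD mA mB) nAB).
transitivity (0 + P B)%E; last by rewrite add0e.
by congr (_ + _)%E.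
Qed.

Lemma negl_fin d (N : 'I_d -> set T) : (forall i, P.-negligible (N i)) ->
  P.-negligible (\bigcup_(i in setT) N i).
Proof.
move=> hN.
have -> : \bigcup_(i in setT) N i = \big[setU/set0]_(i <- enum 'I_d) N i.
  rewrite -bigcup_seq; apply/seteqP; split => x [i _ h]; exists i => //=.
  by rewrite mem_enum.
by elim/big_ind: _ => //; [exact: negligible_set0|move=> ? ?; exact: negligibleU].
Qed.

Lemma cdf_mono (Y : T -> R) : measurable_fun setT Y ->
  {homo rv_cdf P Y : r s / r <= s}.
Proof.
move=> mY r s rs; rewrite /rv_cdf fine_le ?fin_num_measure //; try exact: mpre.
apply: le_measure; rewrite ?inE; try exact: mpre.
by apply: preimage_subset => x /=; rewrite !in_itv /= => /le_trans; apply.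
Qed.

Lemma cdf_ge0 (Y : T -> R) s : 0 <= rv_cdf P Y s.
Proof. exact: fine_ge0. Qed.

Lemma cdf_le1 (Y : T -> R) s : measurable_fun setT Y -> rv_cdf P Y s <= 1.
Proof.
move=> mY; rewrite /rv_cdf -lee_fin fineK ?fin_num_measure; try exact: mpre.
  by apply: probability_le1; exact: mpre.
by [].
Qed.

Lemma negl_step (Y : T -> R) r t : measurable_fun setT Y ->
  rv_cdf P Y r <= rv_cdf P Y t ->
  P.-negligible (Y @^-1` `]-oo, r] `\` Y @^-1` `]-oo, t]).
Proof.
move=> mY h.
have [rt|tr] := leP r t.
  apply: (negligibleS _ (negligible_set0 P)) => x /= []; rewrite !in_itv /= => xr [].
  exact: le_trans rt.
have mA : measurable (Y @^-1` `]-oo, r]) by exact: mpre.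
have mB : measurable (Y @^-1` `]-oo, t]) by exact: mpre.
have BA : Y @^-1` `]-oo, t] `<=` Y @^-1` `]-oo, r].
  by move=> x /=; rewrite !in_itv /= => /le_trans; apply; exact: ltW.
have eAB : P (Y @^-1` `]-oo, r]) = P (Y @^-1` `]-oo, t]).
  apply/le_anti/andP; split; last by apply: le_measure; rewrite ?inE.
  rewrite -(fineK (fin_num_measure P _ mA)) -(fineK (fin_num_measure P _ mB)).
  by rewrite lee_fin.
apply/negligibleP; first exact: measurableD.
rewrite measureD //; last by rewrite (le_lt_trans (probability_le1 _ mA)) ?ltry.
rewrite setIidr //; transitivity (P (Y @^-1` `]-oo, t]) - P (Y @^-1` `]-oo, t]))%E.
  by congr (_ - _)%E.
by rewrite subee // fin_num_measure.
Qed.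

Definition ubv (H : R -> R) (b : \bar R) : R :=
  match b with EFin r => H r | +oo%E => 2 | -oo%E => 0 end.

Lemma coord (Y : T -> R) (b : \bar R) : measurable_fun setT Y ->
  let c := ginv (rv_cdf P Y) (ubv (rv_cdf P Y) b) in
  (forall x : R, (x%:E <= c)%E -> (x%:E <= b)%E) /\
  P.-negligible ([set u | ((Y u)%:E <= b)%E] `\` [set u | ((Y u)%:E <= c)%E]).
Proof.
move=> mY /=; set H := rv_cdf P Y.
case: b => [r| |] /=.
- have cr : (ginv H (H r) <= r%:E)%E.
    by apply: ereal_inf_lbound; exists r => //=; exact: lexx.
  split; first by move=> x /le_trans; apply.
  set c := ginv H (H r).
  have key : forall t : R, (c < t%:E)%E -> H r <= H t.
    move=> t /ereal_inf_lt [_ [s hs <-]] st.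
    by apply: (le_trans hs); apply: cdf_mono => //; rewrite -lee_fin ltW.
  pose tn (n : nat) : R := if c is EFin c' then c' + n.+1%:R^-1 else - n%:R.
  have ctn n : (c < (tn n)%:E)%E.
    rewrite /tn; move: cr; case E: c => [c'| |] /= h.
    - by rewrite lte_fin ltrDl invr_gt0.
    - by move: h; rewrite -/c E leNgt ltry.
    - exact: ltNyr.
  have etn x : (c < x%:E)%E -> exists n, tn n < x.
    rewrite /tn; move: cr; case E: c => [c'| |] /= h.
    - by rewrite lte_fin => /ltr_add_invr.
    - by move: h; rewrite -/c E leNgt ltry.
    move=> _; exists (Num.trunc (- x)).+1.
    by rewrite ltrNl; exact: truncnS_gt.
  apply: (@negligibleS _ _ _ _ (\bigcup_n (Y @^-1` `]-oo, r] `\` Y @^-1` `]-oo, tn n]))).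
    move=> u /= [ur ucn]; have := etn (Y u); rewrite ltNge; move/negP: ucn => -> /(_ isT).
    move=> [n hn]; exists n => //=; split; first by rewrite in_itv /= -lee_fin.
    by rewrite in_itv /= leNgt hn.
  apply: negligible_bigcup => n; apply: negl_step => //.
  exact: key.
- split; first by move=> x; rewrite leey.
  have -> : ginv H 2 = +oo%E.
    rewrite /ginv.
    have -> : [set s | 2 <= H s] = set0.
      apply/seteqP; split => s //= h; have := cdf_le1 s mY.
      by rewrite /H => /(le_trans h); rewrite lern1.
    by rewrite image_set0 ereal_inf0.
  by apply: (negligibleS _ (negligible_set0 P)) => u /= [_ []]; rewrite leey.
- have cle : forall x : R, ~ (x%:E <= ginv H 0)%E.
    move=> x h; have : (ginv H 0 <= (x - 1)%:E)%E.
      by apply: ereal_inf_lbound; exists (x - 1) => //; exact: cdf_ge0.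
    by move=> /(le_trans h); rewrite lee_fin lerDl oppr_ge0 ler10.
  split; first by move=> x /cle.
  by apply: (negligibleS _ (negligible_set0 P)) => u /= [].
Qed.


Definition ub d (H : 'I_d -> R -> R) (b : 'I_d -> \bar R) : 'I_d -> R :=
  fun i => ubv (H i) (b i).

Lemma sklar d (Z : 'I_d -> T -> R) (b : 'I_d -> \bar R) : is_rvec Z ->
  rvec_cdfE P Z b = copula_of P Z (ub (fun i => rv_cdf P (Z i)) b).
Proof.
move=> mZ; rewrite /copula_of /rvec_cdfE /ub; congr fine.
set c := fun i => ginv (rv_cdf P (Z i)) (ubv (rv_cdf P (Z i)) (b i)).
have hc i := coord (b i) (mZ i).
apply: eq_negl.
- exact: (@orth_meas _ _ d Z b mZ).
- exact: (@orth_meas _ _ d Z c mZ).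
- by move=> t /= h i; apply: (hc i).1; exact: (h i).
- apply: (negligibleS _ (negl_fin (fun i => (hc i).2))).
  move=> t /= [hb hcn].
  have [i hi] : exists i, ~ ((Z i t)%:E <= c i)%E by apply/existsNP.
  by exists i => //; split => //; exact: hb.
Qed.

End Sk.
End S.

Section Sa.
Variable R : realType.

Definition Sa d (a : 'I_d -> \bar R) : set ('I_d -> R) :=
  [set x | forall k : 'I_d, (k < #|[set j | ((x j)%:E <= a k)%E]%SET|)%N].

Lemma card_lt d (J : {set 'I_d}) k : (forall j, j \in J -> (j < k)%N) ->
  (#|J| <= k)%N.
Proof.
move=> h; rewrite cardE -(size_map (@nat_of_ord d)) -[k](size_iota 0).
apply: uniq_leq_size; first by rewrite map_inj_uniq ?enum_uniq //; exact: val_inj.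
move=> n /mapP [j]; rewrite mem_enum => /h jk ->.
by rewrite mem_iota add0n jk.
Qed.

Lemma card_ge d (J : {set 'I_d}) k :
  (forall j : 'I_d, (j <= k)%N -> j \in J) -> (k < d)%N -> (k.+1 <= #|J|)%N.
Proof.
move=> h kd; rewrite cardE -(size_map (@nat_of_ord d)) -[k.+1](size_iota 0).
apply: uniq_leq_size; first exact: iota_uniq.
move=> n; rewrite mem_iota add0n => nk.
have nd : (n < d)%N by apply: leq_trans nk kd.
by apply/mapP; exists (Ordinal nd) => //; rewrite mem_enum; apply: h.
Qed.

Lemma mono d (x : 'I_d -> R) :
  (forall i j : 'I_d, nat_of_ord j = (nat_of_ord i).+1 -> x i <= x j) ->
  forall i j : 'I_d, (i <= j)%N -> x i <= x j.
Proof.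
move=> h.
suff H : forall n (i j : 'I_d), nat_of_ord j = (i + n)%N -> x i <= x j.
  by move=> i j ij; apply: (H (j - i)%N); rewrite subnKC.
elim => [|n IH] i j e.
  by have -> : j = i by apply: val_inj; rewrite /= e addn0.
have kd : (i + n < d)%N by apply: leq_trans (ltn_ord j); rewrite e addnS.
apply: (le_trans (IH i (Ordinal kd) erefl)); apply: h => /=.
by rewrite e addnS.
Qed.

Lemma Sa_orth d (a : 'I_d -> \bar R) (x : 'I_d -> R) :
  (forall i j : 'I_d, nat_of_ord j = (nat_of_ord i).+1 -> x i <= x j) ->
  Sa a x <-> orth a x.
Proof.
move=> /mono hm; split => h k.
- case: (boolP ((x k)%:E <= a k)%E) => // /negP hk; exfalso.
  have := h k; apply/negP; rewrite -leqNgt.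
  apply: card_lt => j; rewrite inE => hj; rewrite ltnNge; apply/negP => kj.
  by apply: hk; apply: le_trans hj; rewrite lee_fin hm.
- apply: card_ge (ltn_ord k) => j jk; rewrite inE.
  by apply: le_trans (h k); rewrite lee_fin hm.
Qed.

Lemma Sa_perm d (a : 'I_d -> \bar R) (x : 'I_d -> R) (s : {perm 'I_d}) :
  Sa a (fun i => x (s i)) <-> Sa a x.
Proof.
have E : forall k, #|[set j | ((x (s j))%:E <= a k)%E]%SET| = #|[set j | ((x j)%:E <= a k)%E]%SET|.
  move=> k; rewrite -(@card_preimset _ s [set j | ((x j)%:E <= a k)%E]%SET (@perm_inj _ s)).
  by apply: eq_card => j; rewrite !inE.
by split => h k; have := h k; rewrite /= E.
Qed.

Lemma Sa_meas d (a : 'I_d -> \bar R) : <<s @Gorth R d >> (Sa a).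
Proof.
pose GT := g_sigma_algebraType (@Gorth R d).
have -> : Sa a = \bigcap_(k in [set: 'I_d]) \bigcup_(J in [set J : {set 'I_d} | (k < #|J|)%N])
   orth (fun j => if j \in J then a k else +oo%E).
  apply/seteqP; split => x /= h.
  - move=> k _; exists [set j | ((x j)%:E <= a k)%E]%SET; first exact: h.
    by move=> j /=; case: ifPn => [|_]; [rewrite inE | rewrite leey].
  - move=> k; have [J /= kJ hJ] := h k I.
    apply: (leq_trans kJ); apply: subset_leq_card; apply/fintype.subsetP => j jJ.
    by rewrite inE; have := hJ j; rewrite jJ.
apply: (@fin_bigcap_measurable _ GT); first exact: finite_finset.
move=> k _; apply: (@fin_bigcup_measurable _ GT); first exact: finite_finset.
by move=> J _; apply: sub_sigma_algebra; exists (fun j => if j \in J then a k else +oo%E).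
Qed.

End Sa.

Section Ysec.
Variable R : realType.
Context {dT : measure_display} {T : measurableType dT} (P : probability T R).

Lemma Y_pre d (X : 'I_d -> T -> R) (Pi : T -> {perm 'I_d}) i (B : set R) :
  (fun t => X (Pi t i) t) @^-1` B =
  \bigcup_(s in [set: {perm 'I_d}]) (X (s i) @^-1` B `&` Pi @^-1` [set s]).
Proof.
apply/seteqP; split => t /=.
- by move=> h; exists (Pi t) => //.
- by move=> [s _ [h1 h2]]; rewrite h2.
Qed.

Lemma Y_rvec d (X : 'I_d -> T -> R) (Pi : T -> {perm 'I_d}) :
  is_rvec X -> uniform_perm P Pi -> is_rvec (fun i t => X (Pi t i) t).
Proof.
move=> mX hu i _ B mB; rewrite setTI Y_pre.
apply: fin_bigcup_measurable; first exact: finite_finset.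
move=> s _; apply: measurableI; first exact: mpre.
by have [] := hu s.
Qed.

Lemma marg d (X : 'I_d -> T -> R) (Pi : T -> {perm 'I_d}) (F : 'I_d -> R -> R) i x :
  is_rvec X -> uniform_perm P Pi -> indep_vec_perm P X Pi ->
  (forall i, rv_cdf P (X i) = F i) ->
  P ((fun t => X (Pi t i) t) @^-1` `]-oo, x]) =
  (\sum_(s \in [set: {perm 'I_d}]) ((F (s i) x)%:E * ((d`!)%:R^-1)%:E))%E.
Proof.
move=> mX hu hi hF; rewrite Y_pre measure_fin_bigcup //.
- apply: eq_fsbigr => s _.
  have hs : sigmaX X (X (s i) @^-1` `]-oo, x]).
    apply: sub_sigma_algebra; exists (s i), `]-oo, x]%classic; split => //.
  transitivity (P (X (s i) @^-1` `]-oo, x]) * P (Pi @^-1` [set s]))%E.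
    exact: hi.
  have [_ ->] := hu s; congr (_ * _)%E.
  rewrite -hF /rv_cdf fineK // fin_num_measure //; exact: mpre.
- exact: finite_finset.
- move=> s s' _ _ [t [[_ h1] [_ h2]]].
  by rewrite -(h1 : Pi t = s) -(h2 : Pi t = s').
- move=> s _; apply: measurableI; first exact: mpre.
  by have [] := hu s.
Qed.

End Ysec.

Section Main.
Variable R : realType.

Lemma cos_to_Y d (F : 'I_d -> R -> R)
  dA (TA : measurableType dA) (PA : probability TA R) (XA : 'I_d -> TA -> R)
  d1 (T1 : measurableType d1) (P1 : probability T1 R) (X1 : 'I_d -> T1 -> R)
  (Pi : T1 -> {perm 'I_d}) :
  is_rvec XA ->
  {ae PA, forall t, forall i j : 'I_d,
            nat_of_ord j = (nat_of_ord i).+1 -> XA i t <= XA j t} ->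
  (forall i, rv_cdf PA (XA i) = F i) ->
  is_rvec X1 -> (forall i, rv_cdf P1 (X1 i) = F i) ->
  copula_of PA XA = copula_of P1 X1 ->
  forall a, PA (vec XA @^-1` orth a) =
            P1 (vec (fun i t => X1 (Pi t i) t) @^-1` Sa a).
Proof.
move=> mXA hae hFA mX1 hF1 hC a.
have hn : PA.-negligible (~` [set t | forall i j : 'I_d,
            nat_of_ord j = (nat_of_ord i).+1 -> XA i t <= XA j t]) := hae.
have [N [mN N0 sN]] := hn.
have mO : measurable (vec XA @^-1` orth a) by exact: orth_meas.
have mS : measurable (vec XA @^-1` Sa a) by apply: (pre_meas PA); [|exact: Sa_meas].
have mNC : measurable (~` N) by exact: measurableC.
have nN : PA.-negligible N by exists N; split.
have step1 : PA (vec XA @^-1` orth a) = PA (vec XA @^-1` Sa a).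
  rewrite (@eq_negl _ _ _ PA (vec XA @^-1` orth a) (vec XA @^-1` orth a `&` ~` N)) //;
    last 2 first.
  - exact: measurableI.
  - by apply: (negligibleS _ nN) => t /= [h1] /not_andP [//|/contrapT].
  rewrite (@eq_negl _ _ _ PA (vec XA @^-1` Sa a) (vec XA @^-1` Sa a `&` ~` N)) //;
    last 2 first.
  - exact: measurableI.
  - by apply: (negligibleS _ nN) => t /= [h1] /not_andP [//|/contrapT].
  congr (PA _); apply/seteqP; split => t /= [h1 h2]; split => //.
  - apply/(Sa_orth a (x := fun i => XA i t)) => //.
    by apply: contrapT => hno; apply: h2; apply: sN.
  - apply/(Sa_orth a (x := fun i => XA i t)) => //.
    by apply: contrapT => hno; apply: h2; apply: sN.
rewrite step1.
have step2 : PA (vec XA @^-1` Sa a) = P1 (vec X1 @^-1` Sa a).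
  apply: law_transfer => //; last exact: Sa_meas.
  move=> b; rewrite (sklar PA b mXA) (sklar P1 b mX1).
  have -> : (fun i => rv_cdf PA (XA i)) = F by apply/funext => i; rewrite hFA.
  have -> : (fun i => rv_cdf P1 (X1 i)) = F by apply/funext => i; rewrite hF1.
  by rewrite hC.
rewrite step2; congr (P1 _); apply/seteqP; split => t /=.
- by move=> h; apply/(Sa_perm a (fun j => X1 j t) (Pi t)).
- by move=> h; apply/(Sa_perm a (fun j => X1 j t) (Pi t)).
Qed.

End Main.

Theorem mainTheorem7 (R : realType) (d : nat) (F : 'I_d -> R -> R) :
  calF F ->
  forall C1 C2 D : ('I_d -> R) -> R,
    COS F C1 -> COS F C2 -> SF F C1 D -> SF F C2 D -> C1 = C2.
Proof.
move=> _ C1 C2 D [dA [TA [PA [XA [mXA aeA hFA hCA]]]]]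
  [dB [TB [PB [XB [mXB aeB hFB hCB]]]]]
  [d1 [T1 [P1 [X1 [Pi1 [mX1 hF1 hC1 [hu1 hi1] hD1]]]]]]
  [d2 [T2 [P2 [X2 [Pi2 [mX2 hF2 hC2 [hu2 hi2] hD2]]]]]].
apply/funext => y.
pose a := fun i => ginv (F i) (y i).
have eA : C1 y = fine (PA (vec XA @^-1` orth a)).
  rewrite hCA /copula_of /rvec_cdfE.
  congr (fine (PA _)); apply/seteqP; rewrite /a.
  by split => t /= h i; move: (h i); rewrite hFA.
have eB : C2 y = fine (PB (vec XB @^-1` orth a)).
  rewrite hCB /copula_of /rvec_cdfE.
  congr (fine (PB _)); apply/seteqP; rewrite /a.
  by split => t /= h i; move: (h i); rewrite hFB.
rewrite eA eB.
rewrite (cos_to_Y Pi1 mXA aeA hFA mX1 hF1); last by rewrite -hCA -hC1.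
rewrite (cos_to_Y Pi2 mXB aeB hFB mX2 hF2); last by rewrite -hCB -hC2.
congr fine.
apply: law_transfer; [exact: Y_rvec|exact: Y_rvec| |exact: Sa_meas].
move=> b; rewrite (sklar P1 b (Y_rvec mX1 hu1)) (sklar P2 b (Y_rvec mX2 hu2)).
rewrite -hD1 -hD2; congr D; congr ub; apply/funext => i; apply/funext => x.
by rewrite /rv_cdf (marg _ _ mX1 hu1 hi1 hF1) (marg _ _ mX2 hu2 hi2 hF2).
Qed.
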